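(* Let $T\ge1$ and let $V_1,W_1,\dots,V_T,W_T$ be finite-dimensional systems, $\tilde V:=W_T\otimes V_T\otimes\cdots\otimes W_1\otimes V_1$. Assume that for each $t\in\{1,\dots,T\}$ there is a group $\mathcal{G}^{(t)}$ with two projective unitary representations $g\mapsto U^{(t)}_g$ on $W_t$ and $g\mapsto\tilde U^{(t)}_g$ on $V_t$, where $g\mapsto\tilde U^{(t)}_g$ is irreducible for every $t$. Then every $\chi^\star\in\mathsf{Pos}_{\tilde V}$ satisfying $$\big(\hat 1_{W_T\otimes V_T\otimes\cdots\otimes W_{t+1}\otimes V_{t+1}}\otimes\mathrm{Ad}_{U^{(t)}_g\otimes\tilde U^{(t)}_g}\otimes\hat 1_{W_{t-1}\otimes V_{t-1}\otimes\cdots\otimes W_1\otimes V_1}\big)(\chi^\star)=\chi^\star\quad\forall t\in\{1,\dots,T\},\ g\in\mathcal{G}^{(t)}$$ is of the form $\chi^\star=\lambda\tilde\chi$ with $\lambda\ge0$ and $\tilde\chi\in\mathsf{Comb}_{W_T,V_T,\dots,W_1,V_1}$.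
   Context: $\mathsf{Pos}_X$: positive semidefinite matrices on $X$; $\hat 1_X$: identity map on operators on $X$; $\mathrm{Ad}_U(\rho):=U\rho U^\dagger$. $\mathsf{Comb}_{W_T,V_T,\dots,W_1,V_1}$ is the set of $\tau\in\mathsf{Pos}_{\tilde V}$ for which there exist $\tau^{(t)}\in\mathsf{Pos}_{W_t\otimes V_t\otimes\cdots\otimes W_1\otimes V_1}$ ($1\le t\le T-1$) with $\mathrm{Tr}_{W_t}\tau^{(t)}=I_{V_t}\otimes\tau^{(t-1)}$ for all $1\le t\le T$, where $\tau^{(0)}:=1$ and $\tau^{(T)}:=\tau$. *)

(* Defs.v *)
From HB Require Import structures.
From mathcomp Require Import all_boot all_order all_algebra.
From mathcomp Require Export mxtens.
From Stdlib Require Import PeanoNat.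
Set Implicit Arguments. Unset Strict Implicit. Unset Printing Implicit Defensive.
Import Order.TTheory GRing.Theory Num.Theory.
Local Open Scope ring_scope.

Record group := Group {
  gcar :> Type;
  gmul : gcar -> gcar -> gcar;
  gone : gcar;
  ginv : gcar -> gcar;
  gmulA : forall x y z, gmul x (gmul y z) = gmul (gmul x y) z;
  gmul1 : forall x, gmul gone x = x;
  gmulV : forall x, gmul (ginv x) x = gone
}.

Section Defs.
Variable C : numClosedFieldType.

Definition adjmx m n (A : 'M[C]_(m, n)) : 'M[C]_(n, m) := (map_mx Num.conj A)^T.

Definition unitary n (U : 'M[C]_n) : Prop := U *m adjmx U = 1%:M.

Definition psd n (A : 'M[C]_n) : Prop :=
  adjmx A = A /\ forall v : 'cV[C]_n, 0 <= (adjmx v *m A *m v) 0 0.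

Definition proj_unitary_rep (G : group) n (U : G -> 'M[C]_n) : Prop :=
  (forall g, unitary (U g)) /\
  (forall g h : G, exists c : C, U (gmul g h) = c *: (U g *m U h)).

(* irreducibility: C^n <> 0 and the only U-invariant subspaces of C^n
   (column vectors, spanned by the transposed rows of S) are 0 and C^n *)
Definition irreducible (G : group) n (U : G -> 'M[C]_n) : Prop :=
  (0 < n)%N /\
  forall S : 'M[C]_n, (forall g, (S *m (U g)^T <= S)%MS) ->
    \rank S = 0%N \/ \rank S = n.

Definition ptrace1 m n (A : 'M[C]_(m * n)) : 'M[C]_n :=
  \matrix_(j, k) \sum_(i < m) A (mxtens_index (i, j)) (mxtens_index (i, k)).

End Defs.

Fixpoint dimS (dW dV : nat -> nat) (t : nat) : nat :=
  match t with
  | 0 => 1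
  | s.+1 => (dW s.+1 * (dV s.+1 * dimS dW dV s))%N
  end.

Fixpoint tensS (C : numClosedFieldType) (dW dV : nat -> nat)
    (X : forall s, 'M[C]_(dW s)) (Y : forall s, 'M[C]_(dV s)) (t : nat)
    : 'M[C]_(dimS dW dV t) :=
  match t with
  | 0 => 1%:M
  | s.+1 => X s.+1 *t (Y s.+1 *t tensS X Y s)
  end.

Definition site (C : numClosedFieldType) (d : nat -> nat) (t : nat)
    (M : 'M[C]_(d t)) (s : nat) : 'M[C]_(d s) :=
  match Nat.eq_dec t s with
  | left e => eq_rect t (fun k => 'M[C]_(d k)) M s e
  | right _ => 1%:M
  end.

Definition comb (C : numClosedFieldType) (dW dV : nat -> nat) (T : nat)
    (tau : 'M[C]_(dimS dW dV T)) : Prop :=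
  psd tau /\
  exists taus : forall t, 'M[C]_(dimS dW dV t),
    taus 0%N = 1%:M /\ taus T = tau /\
    (forall t, (1 <= t < T)%N -> psd (taus t)) /\
    (forall s, (s < T)%N ->
       @ptrace1 C (dW s.+1) (dV s.+1 * dimS dW dV s) (taus s.+1)
       = (1%:M : 'M[C]_(dV s.+1)) *t taus s).

(* Main.v *)
Require Import Defs.
From mathcomp Require Import all_boot all_order all_algebra.
From mathcomp Require spectral.
From Stdlib Require Import PeanoNat.
Import Order.TTheory GRing.Theory Num.Theory.
Local Open Scope ring_scope.
Set Implicit Arguments. Unset Strict Implicit. Unset Printing Implicit Defensive.

Section H.
Variable C : numClosedFieldType.

Lemma sum_delta n (i : 'I_n) (F : 'I_n -> C) : \sum_a (i == a)%:R * F a = F i.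
Proof.
rewrite (bigD1 i) //= eqxx mul1r big1 ?addr0 // => a /negbTE.
by rewrite eq_sym => ->; rewrite mul0r.
Qed.

Lemma sum_delta_r n (i : 'I_n) (F : 'I_n -> C) : \sum_a F a * (a == i)%:R = F i.
Proof.
rewrite (bigD1 i) //= eqxx mulr1 big1 ?addr0 // => a /negbTE ->.
by rewrite mulr0.
Qed.

Lemma sum_tens m n (F : 'I_(m*n) -> C) :
  \sum_p F p = \sum_i \sum_j F (mxtens_index (i, j)).
Proof.
rewrite (reindex (@mxtens_index m n)) /=; last first.
  by exists (@mxtens_unindex m n) => x _; rewrite (mxtens_indexK, mxtens_unindexK).
by rewrite pair_big /=; apply: eq_bigr => -[i j].
Qed.

Lemma adjmxE m n (A : 'M[C]_(m, n)) i j : adjmx A i j = (A j i)^*.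
Proof. by rewrite !mxE. Qed.

Lemma adjmx_mul m n p (A : 'M[C]_(m, n)) (B : 'M[C]_(n, p)) :
  adjmx (A *m B) = adjmx B *m adjmx A.
Proof. by rewrite /adjmx map_mxM trmx_mul. Qed.

Lemma adjmx_tens m n p q (A : 'M[C]_(m, n)) (B : 'M[C]_(p, q)) :
  adjmx (A *t B) = adjmx A *t adjmx B.
Proof. by rewrite /adjmx map_mxT trmx_tens. Qed.

Lemma adjmx1 n : adjmx (1%:M : 'M[C]_n) = 1%:M.
Proof. by apply/matrixP => i j; rewrite !mxE eq_sym; case: (_ == _); rewrite /= ?conjC1 ?conjC0. Qed.

Lemma adjmxK m n (A : 'M[C]_(m, n)) : adjmx (adjmx A) = A.
Proof. by apply/matrixP => i j; rewrite !mxE conjCK. Qed.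

Lemma adjmxD m n (A B : 'M[C]_(m, n)) : adjmx (A + B) = adjmx A + adjmx B.
Proof. by apply/matrixP => i j; rewrite !mxE rmorphD. Qed.

Lemma adjmxZ m n c (A : 'M[C]_(m, n)) : adjmx (c *: A) = c^* *: adjmx A.
Proof. by apply/matrixP => i j; rewrite !mxE rmorphM. Qed.

Lemma adjmx_sum m n I (r : seq I) (P : pred I) (F : I -> 'M[C]_(m, n)) :
  adjmx (\sum_(i <- r | P i) F i) = \sum_(i <- r | P i) adjmx (F i).
Proof.
apply/matrixP => i j; rewrite adjmxE !summxE rmorph_sum.
by apply: eq_bigr => k _; rewrite adjmxE.
Qed.

Lemma tens11 m n : (1%:M : 'M[C]_m) *t (1%:M : 'M[C]_n) = 1%:M.
Proof.
apply/matrixP => p q.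
case: (mxtens_indexP p) => i j; case: (mxtens_indexP q) => k l.
rewrite tensmxE !mxE (inj_eq (can_inj (@mxtens_indexK _ _))) xpair_eqE.
by rewrite -natrM mulnb.
Qed.

Lemma bformE n (u w : 'cV[C]_n) (A : 'M[C]_n) :
  (adjmx u *m A *m w) 0 0 = \sum_p \sum_q (u p 0)^* * A p q * w q 0.
Proof.
rewrite mxE exchange_big; apply: eq_bigr => q _; rewrite mxE mulr_suml.
by apply: eq_bigr => p _; rewrite adjmxE.
Qed.

Lemma mulT1l m n k (A : 'M[C]_m) (Y : 'M[C]_(m * n, k)) i j q :
  ((A *t 1%:M) *m Y) (mxtens_index (i, j)) q
  = \sum_a A i a * Y (mxtens_index (a, j)) q.
Proof.
rewrite mxE sum_tens; apply: eq_bigr => a _.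
rewrite (bigD1 j) //= tensmxE !mxE eqxx mulr1 big1 ?addr0 // => b /negbTE nb.
by rewrite tensmxE mxE eq_sym nb mulr0 mul0r.
Qed.

Lemma mulT1r m n k (A : 'M[C]_m) (Y : 'M[C]_(k, m * n)) p i l :
  (Y *m (A *t 1%:M)) p (mxtens_index (i, l))
  = \sum_a Y p (mxtens_index (a, l)) * A a i.
Proof.
rewrite mxE sum_tens; apply: eq_bigr => a _.
rewrite (bigD1 l) //= tensmxE !mxE eqxx mulr1 big1 ?addr0 // => b /negbTE nb.
by rewrite tensmxE mxE nb mulr0 mulr0.
Qed.

Lemma mul1Tl m n k (B : 'M[C]_n) (Y : 'M[C]_(m * n, k)) i j q :
  ((1%:M *t B) *m Y) (mxtens_index (i, j)) q
  = \sum_b B j b * Y (mxtens_index (i, b)) q.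
Proof.
rewrite mxE sum_tens (bigD1 i) //= [X in _ + X]big1 ?addr0.
  by apply: eq_bigr => b _; rewrite tensmxE mxE eqxx mul1r.
move=> a /negbTE na; apply: big1 => b _.
by rewrite tensmxE mxE eq_sym na mul0r mul0r.
Qed.

Lemma mul1Tr m n k (B : 'M[C]_n) (Y : 'M[C]_(k, m * n)) p i l :
  (Y *m (1%:M *t B)) p (mxtens_index (i, l))
  = \sum_b Y p (mxtens_index (i, b)) * B b l.
Proof.
rewrite mxE sum_tens (bigD1 i) //= [X in _ + X]big1 ?addr0.
  by apply: eq_bigr => b _; rewrite tensmxE mxE eqxx mul1r.
move=> a /negbTE na; apply: big1 => b _.
by rewrite tensmxE mxE na mul0r mulr0.
Qed.

Lemma ptrace1E m n (X : 'M[C]_(m * n)) j k :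
  ptrace1 X j k = \sum_i X (mxtens_index (i, j)) (mxtens_index (i, k)).
Proof. by rewrite mxE. Qed.

Lemma ptrace1_A m n (A : 'M[C]_m) (X : 'M[C]_(m * n)) :
  adjmx A *m A = 1%:M ->
  ptrace1 ((A *t 1%:M) *m X *m (adjmx A *t 1%:M)) = ptrace1 X.
Proof.
move=> uA; apply/matrixP => j k; rewrite !ptrace1E.
under eq_bigr => i _ do rewrite mulT1r.
under eq_bigr => i _ do under eq_bigr => c _ do rewrite mulT1l mulr_suml.
rewrite exchange_big /=; apply: eq_bigr => c _.
rewrite exchange_big /=.
transitivity (\sum_a (adjmx A *m A) c a * X (mxtens_index (a, j)) (mxtens_index (c, k))).
  apply: eq_bigr => a _; rewrite mxE mulr_suml; apply: eq_bigr => i _.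
  by rewrite adjmxE mulrC -mulrA mulrC.
by rewrite uA; under eq_bigr => a _ do rewrite mxE; rewrite sum_delta.
Qed.

Lemma ptrace1_B m n (B B' : 'M[C]_n) (X : 'M[C]_(m * n)) :
  ptrace1 ((1%:M *t B) *m X *m (1%:M *t B')) = B *m ptrace1 X *m B'.
Proof.
apply/matrixP => j k; rewrite ptrace1E !mxE.
under eq_bigr => i _ do rewrite mul1Tr.
under eq_bigr => i _ do under eq_bigr => d _ do rewrite mul1Tl mulr_suml.
rewrite exchange_big /=; apply: eq_bigr => d _.
rewrite mxE mulr_suml exchange_big /=; apply: eq_bigr => b _.
rewrite ptrace1E mulr_sumr mulr_suml; apply: eq_bigr => i _.
by [].
Qed.

Lemma schur (G : group) n (Ut : G -> 'M[C]_n) :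
  proj_unitary_rep Ut -> irreducible Ut ->
  forall M, (forall g, Ut g *m M *m adjmx (Ut g) = M) -> exists z, M = z%:M.
Proof.
move=> [hu _] [n0 hirr] M hM.
have comm g : Ut g *m M = M *m Ut g.
  have u' : adjmx (Ut g) *m Ut g = 1%:M := mulmx1C (hu g).
  by rewrite -{2}(hM g) -!mulmxA u' mulmx1.
have [a ha] := spectral.eigenvalue_closed (M^T) n0.
pose S := eigenspace M^T a.
have eS : S *m M^T = a *: S by apply/eigenspaceP; apply: submx_refl.
have inv g : (S *m (Ut g)^T <= S)%MS.
  apply/eigenspaceP.
  by rewrite -mulmxA -trmx_mul -(comm g) trmx_mul mulmxA eS scalemxAl.
case: (hirr S inv) => hr.
  by move: ha; rewrite /eigenvalue -/S -mxrank_eq0 hr.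
have : (1%:M <= S)%MS by apply: submx_full; rewrite /row_full hr.
move/eigenspaceP; rewrite mul1mx => eT.
exists a; by rewrite -[M]trmxK eT scalemx1 tr_scalar_mx.
Qed.

Lemma schur_blk (G : group) n p (Ut : G -> 'M[C]_n) :
  proj_unitary_rep Ut -> irreducible Ut ->
  forall Y : 'M[C]_(n * p),
  (forall g, (Ut g *t 1%:M) *m Y *m (adjmx (Ut g) *t 1%:M) = Y) ->
  exists Z : 'M[C]_p, Y = 1%:M *t Z.
Proof.
move=> hU hI Y hY.
have n0 : (0 < n)%N by case: hI.
pose j0 := Ordinal n0.
pose Mpq p q := \matrix_(j, k) Y (mxtens_index (j, p)) (mxtens_index (k, q)).
have hM (a b : 'I_p) g : Ut g *m Mpq a b *m adjmx (Ut g) = Mpq a b.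
  apply/matrixP => j k.
  have e := congr1 (fun A : 'M[C]_(n * p) => A (mxtens_index (j, a)) (mxtens_index (k, b))) (hY g).
  rewrite /= mulT1r in e.
  rewrite [RHS]mxE -e mxE; apply: eq_bigr => c _; rewrite mulT1l mxE.
  by congr (_ * _); apply: eq_bigr => a0 _; rewrite mxE.
exists (\matrix_(p, q) Y (mxtens_index (j0, p)) (mxtens_index (j0, q))).
apply/matrixP => x y.
case: (mxtens_indexP x) => j p0; case: (mxtens_indexP y) => k q.
have [z hz] := schur hU hI (hM p0 q).
have e1 : Y (mxtens_index (j, p0)) (mxtens_index (k, q)) = Mpq p0 q j k by rewrite mxE.
have e2 : Y (mxtens_index (j0, p0)) (mxtens_index (j0, q)) = Mpq p0 q j0 j0 by rewrite mxE.
rewrite tensmxE !mxE e1 hz e2 hz !mxE eqxx mulr1n.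
by rewrite mulr_natl.
Qed.

Lemma mxDE m n (A B : 'M[C]_(m, n)) i j : (A + B) i j = A i j + B i j.
Proof. by rewrite mxE. Qed.
Lemma mxZE m n c (A : 'M[C]_(m, n)) i j : (c *: A) i j = c * A i j.
Proof. by rewrite mxE. Qed.

Lemma adjmx_delta n (a : 'I_n) :
  adjmx (delta_mx a 0 : 'cV[C]_n) = delta_mx 0 a.
Proof. by apply/matrixP => i j; rewrite !mxE rmorph_nat andbC. Qed.

Lemma bform_delta n (X : 'M[C]_n) a b :
  (adjmx (delta_mx a 0 : 'cV[C]_n) *m X *m (delta_mx b 0 : 'cV[C]_n)) 0 0 = X a b.
Proof. by rewrite adjmx_delta -rowE -colE !mxE. Qed.

Lemma psd_diag n (X : 'M[C]_n) p : psd X -> 0 <= X p p.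
Proof. by move=> [_ h]; have := h (delta_mx p 0); rewrite bform_delta. Qed.

Lemma psd_zero n (X : 'M[C]_n) : psd X -> (forall p, X p p = 0) -> X = 0.
Proof.
move=> [hh hq] hd; apply/matrixP => a b; rewrite mxE.
have [->|nab] := eqVneq a b; first exact: hd.
have [x hx] : {x : C | X a b = x} by exists (X a b).
rewrite hx.
have hba : X b a = x^* by rewrite -hx -[in LHS]hh adjmxE.
pose z := - x^*.
have := hq (delta_mx a 0 + z *: delta_mx b 0 : 'cV[C]_n).
rewrite adjmxD adjmxZ !(mulmxDl, mulmxDr) -!scalemxAl -!scalemxAr !mxDE !mxZE.
rewrite !bform_delta !hd hba hx /z rmorphN /= conjCK.
rewrite !mulr0 !addr0 add0r !mulNr -normCK -normCKC -opprD oppr_ge0 => h.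
have h2 : `|x| ^+ 2 <= 0 by rewrite -(pmulrn_lle0 _ (isT : (0 < 2)%N)) mulr2n.
by apply/eqP; rewrite -normr_eq0 -sqrf_eq0 eq_le h2 exprn_ge0.
Qed.

Definition blk m n (i : 'I_m) (Y : 'M[C]_(m * n)) : 'M[C]_n :=
  \matrix_(j, k) Y (mxtens_index (i, j)) (mxtens_index (i, k)).

Lemma psd_blk m n (i : 'I_m) (Y : 'M[C]_(m * n)) : psd Y -> psd (blk i Y).
Proof.
move=> [hh hq]; split.
  by apply/matrixP => j k; rewrite adjmxE !mxE -[in RHS]hh adjmxE.
move=> v.
pose w : 'cV[C]_(m * n) :=
  \col_p (if (mxtens_unindex p).1 == i then v (mxtens_unindex p).2 0 else 0).
have hw a j : w (mxtens_index (a, j)) 0 = if a == i then v j 0 else 0.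
  by rewrite mxE mxtens_indexK.
suff <- : (adjmx w *m Y *m w) 0 0 = (adjmx v *m blk i Y *m v) 0 0 by [].
rewrite !bformE sum_tens (bigD1 i) //= [X in _ + X]big1 ?addr0; last first.
  move=> a /negbTE na; apply: big1 => j _; apply: big1 => q _.
  by rewrite (hw a j) na rmorph0 !mul0r.
apply: eq_bigr => j _; rewrite sum_tens (bigD1 i) //= [X in _ + X]big1 ?addr0; last first.
  move=> c /negbTE nc; apply: big1 => k _.
  by rewrite (hw c k) nc mulr0.
by apply: eq_bigr => k _; rewrite !hw eqxx mxE.
Qed.

Lemma psd0 n : psd (0 : 'M[C]_n).
Proof.
split; first by apply/matrixP => i j; rewrite !mxE rmorph0.
by move=> v; rewrite mulmx0 mul0mx mxE.
Qed.

Lemma psdD n (A B : 'M[C]_n) : psd A -> psd B -> psd (A + B).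
Proof.
move=> [hA qA] [hB qB]; split; first by rewrite adjmxD hA hB.
by move=> v; rewrite mulmxDr mulmxDl mxE addr_ge0.
Qed.

Lemma psdZ n c (A : 'M[C]_n) : 0 <= c -> psd A -> psd (c *: A).
Proof.
move=> c0 [hA qA]; split; first by rewrite adjmxZ hA geC0_conj.
by move=> v; rewrite -scalemxAr -scalemxAl mxE mulr_ge0.
Qed.

Lemma ptrace1_blk m n (X : 'M[C]_(m * n)) : ptrace1 X = \sum_i blk i X.
Proof. by apply/matrixP => j k; rewrite summxE !mxE; apply: eq_bigr => i _; rewrite mxE. Qed.

Lemma psd_ptrace1 m n (X : 'M[C]_(m * n)) : psd X -> psd (ptrace1 X).
Proof.
move=> hX; rewrite ptrace1_blk; apply: (big_ind (@psd C n)); first exact: psd0.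
  exact: psdD.
by move=> i _; exact: psd_blk.
Qed.

Lemma psd_ptrace1_0 m n (X : 'M[C]_(m * n)) : psd X -> ptrace1 X = 0 -> X = 0.
Proof.
move=> hX h0; apply: psd_zero => // p.
case: (mxtens_indexP p) => i j.
have := congr1 (fun A : 'M[C]_n => A j j) h0; rewrite /= ptrace1E mxE => hs.
have := @psumr_eq0P _ _ predT _ (fun i _ => psd_diag (mxtens_index (i, j)) hX) hs.
by move=> /(_ i isT).
Qed.

Lemma blk_1T m n (i : 'I_m) (Z : 'M[C]_n) : blk i (1%:M *t Z) = Z.
Proof. by apply/matrixP => j k; rewrite mxE tensmxE mxE eqxx mul1r. Qed.

Lemma site_eq (d : nat -> nat) t (M : 'M[C]_(d t)) : @site C d t M t = M.
Proof.
rewrite /site; case: Nat.eq_dec => [e|//].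
by rewrite (eq_axiomK e).
Qed.

Lemma site_neq (d : nat -> nat) t (M : 'M[C]_(d t)) s : t <> s -> @site C d t M s = 1%:M.
Proof. by rewrite /site; case: Nat.eq_dec. Qed.

Lemma tensS_low (dW dV : nat -> nat) t (A : 'M[C]_(dW t)) (B : 'M[C]_(dV t)) T :
  (T < t)%N -> tensS (site A) (site B) T = 1%:M.
Proof.
elim: T => [//|T IH] lt /=.
rewrite !site_neq ?IH ?tens11 //; try (by apply: ltnW);
  by move=> e; rewrite e ltnn in lt.
Qed.

Lemma ptrace1Z m n c (X : 'M[C]_(m * n)) : ptrace1 (c *: X) = c *: ptrace1 X.
Proof.
by apply/matrixP => j k; rewrite !mxE mulr_sumr; apply: eq_bigr => i _; rewrite mxE.
Qed.

Lemma tens1Z m n c (X : 'M[C]_n) : (1%:M : 'M[C]_m) *t (c *: X) = c *: (1%:M *t X).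
Proof.
apply/matrixP => x y; case: (mxtens_indexP x) => a b; case: (mxtens_indexP y) => a' b'.
by rewrite mxZE !tensmxE mxZE mulrCA.
Qed.

Lemma psd1 n : psd (1%:M : 'M[C]_n).
Proof.
split; first exact: adjmx1.
move=> v; rewrite bformE; apply: sumr_ge0 => p _.
rewrite (bigD1 p) //= [X in _ + X]big1 ?addr0.
  by rewrite mxE eqxx mulr1 -normCKC exprn_ge0.
by move=> q /negbTE nq; rewrite mxE eq_sym nq mulr0 mul0r.
Qed.

Lemma ptrace1_scal1 m n c :
  ptrace1 (c *: 1%:M : 'M[C]_(m * n)) = (c *+ m) *: 1%:M.
Proof.
apply/matrixP => j k; rewrite ptrace1E !mxE.
under eq_bigr => i _ do rewrite mxE [in 1%:M _ _]mxE (inj_eq (can_inj (@mxtens_indexK _ _))) xpair_eqE eqxx /=.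
by rewrite sumr_const card_ord mulrnAl.
Qed.

Lemma tens1_scal1 m n c :
  (1%:M : 'M[C]_m) *t (c *: 1%:M : 'M[C]_n) = c *: 1%:M.
Proof. by rewrite tens1Z tens11. Qed.

Section Gen.
Unset Implicit Arguments.
Variables (dW dV : nat -> nat) (G : nat -> group).
Variables (U : forall t, G t -> 'M[C]_(dW t)) (Ut : forall t, G t -> 'M[C]_(dV t)).

Definition ext (k : nat) (X : 'M[C]_(dimS dW dV k))
  (f : forall t, 'M[C]_(dimS dW dV t)) : forall t, 'M[C]_(dimS dW dV t) :=
  fun t => match Nat.eq_dec k t with
           | left e => eq_rect k (fun j => 'M[C]_(dimS dW dV j)) X t e
           | right _ => f t end.

Lemma ext_eq k X f : @ext k X f k = X.
Proof. by rewrite /ext; case: Nat.eq_dec => [e|//]; rewrite (eq_axiomK e). Qed.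

Lemma ext_neq k X f t : k <> t -> @ext k X f t = f t.
Proof. by rewrite /ext; case: Nat.eq_dec. Qed.

Lemma gen T :
  (forall t, (1 <= t <= T)%N -> proj_unitary_rep (U t)) ->
  (forall t, (1 <= t <= T)%N -> proj_unitary_rep (Ut t)) ->
  (forall t, (1 <= t <= T)%N -> irreducible (Ut t)) ->
  forall chi : 'M[C]_(dimS dW dV T), psd chi ->
  (forall t, (1 <= t <= T)%N -> forall g : G t,
     let O := tensS (site (U t g)) (site (Ut t g)) T in
     O *m chi *m adjmx O = chi) ->
  exists taus : forall t, 'M[C]_(dimS dW dV t),
    taus T = chi /\ (forall t, (t <= T)%N -> psd (taus t)) /\
    (forall s, (s < T)%N ->
       @ptrace1 C (dW s.+1) (dV s.+1 * dimS dW dV s) (taus s.+1)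
       = (1%:M : 'M[C]_(dV s.+1)) *t taus s) /\
    exists lam, taus 0%N = lam%:M.
Proof.
elim: T => [|T IH] hU hUt hirr chi hchi hsym.
  exists (@ext 0 chi (fun=> 0)); split; first exact: ext_eq.
  split; first by move=> t; rewrite leqn0 => /eqP ->; rewrite ext_eq.
  split; first by [].
  by exists (chi 0 0); rewrite ext_eq {1}[chi]mx11_scalar.
have hT1 : (1 <= T.+1 <= T.+1)%N by rewrite leqnn.
pose Y := @ptrace1 C (dW T.+1) (dV T.+1 * dimS dW dV T) chi.
have hY : forall g, (Ut T.+1 g *t 1%:M) *m Y *m (adjmx (Ut T.+1 g) *t 1%:M) = Y.
  move=> g; have := hsym _ hT1 g; rewrite /= !site_eq tensS_low // => e.
  rewrite /Y -[in RHS]e adjmx_tens adjmx_tens adjmx1.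
  rewrite (tensmx_decr (U T.+1 g)) (tensmx_decl (adjmx (U T.+1 g))).
  have uU : adjmx (U T.+1 g) *m U T.+1 g = 1%:M by apply: mulmx1C; case: (hU _ hT1) => h _; exact: h.
  have -> : forall P Q R S W : 'M[C]_(dimS dW dV T.+1),
     P *m Q *m R *m (S *m W) = P *m (Q *m R *m S) *m W by move=> *; rewrite !mulmxA.
  by rewrite ptrace1_A // ptrace1_B.
have [Z hZ] := schur_blk (hUt _ hT1) (hirr _ hT1) hY.
have n0 : (0 < dV T.+1)%N by case: (hirr _ hT1).
pose j0 := Ordinal n0.
have hpY : psd Y by exact: psd_ptrace1.
have hpZ : psd Z by rewrite -(blk_1T j0 Z) -hZ; exact: psd_blk.
have hle t : (1 <= t <= T)%N -> (1 <= t <= T.+1)%N.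
  by case/andP => a b; rewrite a /= (leq_trans b).
have hne t : (t <= T)%N -> T.+1 <> t by move=> h e; rewrite -e ltnn in h.
have hsymZ : forall t, (1 <= t <= T)%N -> forall g : G t,
     let O := tensS (site (U t g)) (site (Ut t g)) T in
     O *m Z *m adjmx O = Z.
  move=> t ht g /=.
  have htT : (t <= T)%N by case/andP: ht.
  have := hsym _ (hle _ ht) g; rewrite /= !site_neq; try by move=> e; rewrite e ltnn in htT.
  set O := tensS _ _ T => e.
  have e2 := congr1 (@ptrace1 C (dW T.+1) (dV T.+1 * dimS dW dV T)) e.
  rewrite adjmx_tens adjmx_tens !adjmx1 ptrace1_B -/Y hZ in e2.
  rewrite !tensmx_mul !mul1mx in e2.
  by rewrite -[LHS](blk_1T j0) e2 blk_1T.
have hle2 t : (1 <= t <= T)%N -> (1 <= t <= T.+1)%N by exact: hle.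
have [taus [hT [hp [hpt [lam hl]]]]] :=
  IH (fun t h => hU t (hle2 t h)) (fun t h => hUt t (hle2 t h))
     (fun t h => hirr t (hle2 t h)) Z hpZ hsymZ.
exists (@ext T.+1 chi taus); split; first exact: ext_eq.
split.
  move=> t; rewrite leq_eqVlt => /orP [/eqP ->|h]; first by rewrite ext_eq.
  by rewrite ext_neq; [exact: hp | exact: hne].
split.
  move=> s; rewrite ltnS leq_eqVlt => /orP [/eqP ->|h].
    by rewrite ext_eq ext_neq ?hT //; apply: hne.
  rewrite ext_neq ?ext_neq ?hpt //; first by apply: hne; apply: ltnW.
  by move=> [e]; rewrite e ltnn in h.
by exists lam; rewrite ext_neq.
Qed.

End Gen.

Fixpoint qf (dW : nat -> nat) (s : nat) : C :=
  match s with 0 => 1 | s'.+1 => qf dW s' / (dW s'.+1)%:R end.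

Lemma qf_ge0 dW s : 0 <= qf dW s.
Proof. by elim: s => [|s IH] /=; [exact: ler01 | rewrite divr_ge0 ?ler0n]. Qed.

Lemma comb_id (dW dV : nat -> nat) T :
  (forall t, (1 <= t <= T)%N -> (0 < dW t)%N) ->
  comb (qf dW T *: 1%:M : 'M[C]_(dimS dW dV T)).
Proof.
move=> hdW; split; first by apply: psdZ; [exact: qf_ge0 | exact: psd1].
exists (fun t => qf dW t *: 1%:M); split; first by rewrite /= scale1r.
split; first by [].
split; first by move=> t _; apply: psdZ; [exact: qf_ge0 | exact: psd1].
move=> s hs; rewrite ptrace1_scal1 tens1_scal1 /=; congr (_ *: _).
rewrite -mulr_natr divfK // pnatr_eq0 -lt0n; apply: hdW.
by rewrite /= hs.
Qed.

End H.

Theorem lemma2 (C : numClosedFieldType) (T : nat) (hT : (1 <= T)%N)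
  (dW dV : nat -> nat) (hdW : forall t, (1 <= t <= T)%N -> (0 < dW t)%N)
  (G : nat -> group)
  (U : forall t, G t -> 'M[C]_(dW t)) (Ut : forall t, G t -> 'M[C]_(dV t))
  (hU : forall t, (1 <= t <= T)%N -> proj_unitary_rep (U t))
  (hUt : forall t, (1 <= t <= T)%N -> proj_unitary_rep (Ut t))
  (hirr : forall t, (1 <= t <= T)%N -> irreducible (Ut t))
  (chi : 'M[C]_(dimS dW dV T)) (hchi : psd chi)
  (hsym : forall t, (1 <= t <= T)%N -> forall g : G t,
     let O := tensS (site (U t g)) (site (Ut t g)) T in
     O *m chi *m adjmx O = chi) :
  exists lam : C, 0 <= lam /\
    exists chit : 'M[C]_(dimS dW dV T), comb chit /\ chi = lam *: chit.
Proof.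
have [taus [hTc [hp [hpt [lam hl]]]]] := @gen C dW dV G U Ut T hU hUt hirr chi hchi hsym.
have lam0 : 0 <= lam.
  by have := psd_diag 0 (hp 0%N isT); rewrite hl mxE eqxx mulr1n.
case: (eqVneq lam 0) => [l0|ln0].
  have z : forall s, (s <= T)%N -> taus s = 0.
    elim => [_|s IHs hs].
      by rewrite hl l0; apply/matrixP => i j; rewrite !mxE mul0rn.
    apply: (@psd_ptrace1_0 C (dW s.+1) (dV s.+1 * dimS dW dV s)); first exact: (hp s.+1 hs).
    by rewrite hpt // IHs ?tensmx0 // ltnW.
  exists 0; split; first exact: lexx.
  exists (qf C dW T *: 1%:M); split; first exact: comb_id.
  by rewrite -hTc z // scale0r.
exists lam; split; first exact: lam0.
exists (lam^-1 *: chi); split; last by rewrite scalerA mulfV // scale1r.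
split; first by apply: psdZ; rewrite ?invr_ge0.
exists (fun t => lam^-1 *: taus t); split; first by rewrite hl scale_scalar_mx mulVf.
split; first by rewrite hTc.
split; first by move=> t /andP[_ h]; apply: psdZ; [rewrite invr_ge0 | apply: hp; exact: ltnW h].
by move=> s hs; rewrite ptrace1Z hpt // tens1Z.
Qed.
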